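(* Let $X=\{x_1,\dots,x_m\}$ and $Y=\{y_1,\dots,y_n\}$ be finite discrete spaces with $m,n>1$, and let $Z=X\circledast Y$. Then $\mathrm{TC}(Z)=n^2$ and $\mathrm{TC}(Z^{\mathrm{op}})=\mathrm{TC}(Y\circledast X)=m^2$.
   Context: Finite $T_0$ spaces are identified with finite posets (open sets are the down-closed sets; $z^\downarrow=\{w:w\le z\}$ is the minimal open neighborhood). The non-Hausdorff join $A\circledast B$ is $A\sqcup B$ with the orders of $A$ and $B$ kept and $a\le b$ for all $a\in A,b\in B$. $Z^{\mathrm{op}}$ is the finite space with the opposite order. Topological complexity is unreduced: $\mathrm{TC}(W)$ is the minimal $k$ such that $W\times W$ is covered by $k$ open sets each admitting a continuous section of $\pi:W^I\to W\times W$, $\gamma\mapsto(\gamma(0),\gamma(1))$, where $W^I$ carries the compact-open topology. *)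

(* Defs.v *)
From Stdlib Require Import Reals.
Open Scope R_scope.

(** A finite space given by a carrier [T] and a partial order [le].
    Open sets are the down-closed sets. *)
Definition fs_open {T : Type} (le : T -> T -> Prop) (O : T -> Prop) : Prop :=
  forall x y, le y x -> O x -> O y.

Definition prod_open {T : Type} (le : T -> T -> Prop) (V : T * T -> Prop) : Prop :=
  forall p, V p -> exists O1 O2, fs_open le O1 /\ fs_open le O2 /\
     O1 (fst p) /\ O2 (snd p) /\ (forall q, O1 (fst q) -> O2 (snd q) -> V q).

Definition unit_I (t : R) : Prop := 0 <= t <= 1.

(** Continuous path [I -> W] (values outside [0,1] are irrelevant). *)
Definition is_path {T : Type} (le : T -> T -> Prop) (g : R -> T) : Prop :=
  forall t, unit_I t -> forall O, fs_open le O -> O (g t) ->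
    exists d, d > 0 /\ forall s, unit_I s -> Rabs (s - t) < d -> O (g s).

(** Compact-open topology on W^I: generated by the subbasic sets
    {g | g(K) ⊆ O}, K ⊆ I compact, O ⊆ W open. *)
Inductive co_open {T : Type} (le : T -> T -> Prop) : ((R -> T) -> Prop) -> Prop :=
  | co_sub : forall (K : R -> Prop) (O : T -> Prop),
      compact K -> (forall t, K t -> unit_I t) -> fs_open le O ->
      co_open le (fun g => forall t, K t -> O (g t))
  | co_full : co_open le (fun _ => True)
  | co_inter : forall G1 G2, co_open le G1 -> co_open le G2 ->
      co_open le (fun g => G1 g /\ G2 g)
  | co_union : forall (J : Type) (F : J -> (R -> T) -> Prop),
      (forall j, co_open le (F j)) -> co_open le (fun g => exists j, F j g).

(** [s] is a continuous section of [pi : W^I -> W x W] over [U]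
    (U with the subspace topology of W x W). *)
Definition cont_section {T : Type} (le : T -> T -> Prop)
    (U : T * T -> Prop) (s : T * T -> (R -> T)) : Prop :=
  (forall u, U u -> is_path le (s u) /\ s u 0 = fst u /\ s u 1 = snd u) /\
  (forall G, co_open le G -> exists V, prod_open le V /\
      forall u, U u -> (G (s u) <-> V u)).

Definition tc_cover {T : Type} (le : T -> T -> Prop) (k : nat) : Prop :=
  exists U : nat -> (T * T -> Prop),
    (forall i, (i < k)%nat -> prod_open le (U i)) /\
    (forall p, exists i, (i < k)%nat /\ U i p) /\
    (forall i, (i < k)%nat -> exists s, cont_section le (U i) s).

(** Unreduced topological complexity: TC(W) = k. *)
Definition TC_eq {T : Type} (le : T -> T -> Prop) (k : nat) : Prop :=
  tc_cover le k /\ forall j, tc_cover le j -> (k <= j)%nat.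

Definition fin (n : nat) : Type := { i : nat | (i < n)%nat }.
Definition discrete_le {A : Type} (x y : A) : Prop := x = y.

Definition join_le {A B : Type} (leA : A -> A -> Prop) (leB : B -> B -> Prop)
    (x y : A + B) : Prop :=
  match x, y with
  | inl a, inl a' => leA a a'
  | inr b, inr b' => leB b b'
  | inl _, inr _ => True
  | inr _, inl _ => False
  end.

Definition op_le {T : Type} (le : T -> T -> Prop) (x y : T) : Prop := le y x.

(* Main.v *)
Require Import Defs.
From Stdlib Require Import Reals Lra Lia Classical List IndefiniteDescription.
Open Scope R_scope.

Definition loc_open (P : R -> Prop) : Prop :=
  forall t, unit_I t -> P t -> exists d, d > 0 /\ forall s, unit_I s -> Rabs (s - t) < d -> P s.

Lemma I_conn01 (P : R -> Prop) : loc_open P -> loc_open (fun t => ~ P t) -> P 0 -> P 1.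
Proof.
  intros HP HN H0.
  set (E := fun t => 0 <= t <= 1 /\ forall s, 0 <= s <= t -> P s).
  assert (Hb : bound E) by (exists 1; intros t [Ht _]; lra).
  assert (He : exists x, E x).
  { exists 0. split; [lra|]. intros s Hs. replace s with 0 by lra. exact H0. }
  destruct (completeness E Hb He) as [c [Hub Hlub]].
  assert (Hc0 : 0 <= c) by (apply Hub; split; [lra|]; intros s Hs; replace s with 0 by lra; exact H0).
  assert (Hc1 : c <= 1) by (apply Hlub; intros t [Ht _]; lra).
  assert (Happrox : forall d, d > 0 -> exists t, E t /\ c - d < t <= c).
  { intros d Hd. apply NNPP; intro Hno.
    assert (c <= c - d); [|lra].
    apply Hlub. intros t Et. apply Rnot_lt_le. intro Hlt.
    apply Hno. exists t. split; [exact Et| split; [lra| apply Hub; exact Et]]. }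
  assert (HPc : P c).
  { apply NNPP; intro Hn.
    destruct (HN c (conj Hc0 Hc1) Hn) as [d [Hd Hd']].
    destruct (Happrox d Hd) as [t [[Ht Ht'] Ht2]].
    apply (Hd' t); [unfold unit_I; lra | apply Rabs_def1; lra | apply Ht'; lra]. }
  assert (Hbel : forall s, 0 <= s <= c -> P s).
  { intros s Hs. destruct (Req_dec s c) as [->|Hne]; [exact HPc|].
    destruct (Happrox (c - s)) as [t [[Ht Ht'] Ht2]]; [lra|].
    apply Ht'; split; [lra|]; destruct Ht2; lra. }
  destruct (Req_dec c 1) as [->|Hne].
  - exact HPc.
  - exfalso. destruct (HP c (conj Hc0 Hc1) HPc) as [d [Hd Hd']].
    set (c' := Rmin (c + d / 2) 1).
    assert (H1 : c' <= 1) by apply Rmin_r.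
    assert (H2 : c' <= c + d / 2) by apply Rmin_l.
    assert (H3 : c < c') by (apply Rmin_glb_lt; lra).
    assert (Ec' : E c').
    { split; [lra|].
      intros s Hs. destruct (Rle_dec s c) as [Hsc|Hsc]; [apply Hbel; lra|].
      apply Hd'; [unfold unit_I; lra|].
      apply Rabs_def1; lra. }
    assert (c' <= c) by (apply Hub; exact Ec').
    lra.
Qed.

Lemma I_conn (P : R -> Prop) : loc_open P -> loc_open (fun t => ~ P t) -> (P 0 <-> P 1).
Proof.
  intros HP HN. split; [apply I_conn01; auto|].
  intros H1. apply NNPP; intro H0.
  assert (HNN : loc_open (fun t => ~ ~ P t)).
  { intros t Ht Hnn. destruct (HP t Ht (NNPP _ Hnn)) as [d [Hd Hd']].
    exists d; split; auto. }
  exact (I_conn01 _ HN HNN H0 H1).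
Qed.

Lemma pigeon (N k : nat) (Rl : nat -> nat -> Prop) :
  (forall a, (a < N)%nat -> exists b, (b < k)%nat /\ Rl a b) ->
  (forall a a' b, (a < N)%nat -> (a' < N)%nat -> Rl a b -> Rl a' b -> a = a') ->
  (N <= k)%nat.
Proof.
  intros Hex Hinj.
  assert (H' : forall a, exists b, (a < N)%nat -> (b < k)%nat /\ Rl a b).
  { intro a. destruct (Compare_dec.lt_dec a N) as [Ha|Ha].
    - destruct (Hex a Ha) as [b Hb]. exists b. auto.
    - exists 0%nat. intro; contradiction. }
  set (f := fun a => proj1_sig (constructive_indefinite_description _ (H' a))).
  assert (Hf : forall a, (a < N)%nat -> (f a < k)%nat /\ Rl a (f a)).
  { intros a Ha. unfold f. destruct (constructive_indefinite_description _ (H' a)) as [b Hb]. simpl. auto. }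
  replace N with (length (seq 0 N)) by apply length_seq.
  replace k with (length (seq 0 k)) by apply length_seq.
  rewrite <- (length_map f (seq 0%nat N)).
  apply NoDup_incl_length.
  - apply NoDup_map_NoDup_ForallPairs; [|apply seq_NoDup].
    intros a a' Ha Ha' Heq. apply in_seq in Ha. apply in_seq in Ha'.
    destruct (Hf a ltac:(lia)) as [_ R1]. destruct (Hf a' ltac:(lia)) as [_ R2].
    rewrite Heq in R1. apply (Hinj a a' (f a')); auto; lia.
  - intros b Hb. apply in_map_iff in Hb. destruct Hb as [a [<- Ha]].
    apply in_seq in Ha. apply in_seq. destruct (Hf a ltac:(lia)). lia.
Qed.

Section Abs.
Variable T : Type.
Variable le : T -> T -> Prop.
Variable bot : T -> bool.
Hypothesis Hle : forall z w, le z w <-> z = w \/ (bot z = true /\ bot w = false).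

Lemma le_refl z : le z z.
Proof. apply Hle; auto. Qed.

Lemma le_trans a b c : le a b -> le b c -> le a c.
Proof.
  rewrite !Hle. intros [->|[H1 H2]] [->|[H3 H4]]; auto; congruence.
Qed.

Lemma le_top_eq z w : bot w = true -> le z w -> z = w.
Proof. rewrite Hle. intros Hw [->|[_ H]]; congruence. Qed.

Lemma le_bot_top z w : bot z = true -> bot w = false -> le z w.
Proof. intros; apply Hle; auto. Qed.

Lemma le_into_bot z w : bot z = false -> le z w -> z = w.
Proof. rewrite Hle. intros Hz [->|[H _]]; congruence. Qed.

Lemma le_maxl z w : bot z = false -> le z w -> z = w.
Proof. exact (le_into_bot z w). Qed.

Lemma down_open w : fs_open le (fun z => le z w).
Proof. intros a b Hba Ha. exact (le_trans _ _ _ Hba Ha). Qed.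

Lemma path_local g t : is_path le g -> unit_I t ->
  exists d, d > 0 /\ forall s, unit_I s -> Rabs (s - t) < d -> le (g s) (g t).
Proof. intros Hg Ht. apply (Hg t Ht (fun z => le z (g t)) (down_open _) (le_refl _)). Qed.

Lemma co_open_down G : co_open le G -> forall g h, G g -> (forall t, le (h t) (g t)) -> G h.
Proof.
  induction 1 as [K O HK HKI HO| |G1 G2 _ IH1 _ IH2|J F _ IH]; intros g h Hg Hhg; simpl in *.
  - intros t Kt. exact (HO _ _ (Hhg t) (Hg t Kt)).
  - auto.
  - destruct Hg; split; eauto.
  - destruct Hg as [j Hj]. exists j. eauto.
Qed.

Lemma prod_open_down V p q : prod_open le V -> V p -> le (fst q) (fst p) -> le (snd q) (snd p) -> V q.
Proof.
  intros HV Hp H1 H2. destruct (HV p Hp) as [O1 [O2 [HO1 [HO2 [Hp1 [Hp2 Hq]]]]]].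
  apply Hq; [exact (HO1 _ _ H1 Hp1) | exact (HO2 _ _ H2 Hp2)].
Qed.

Lemma section_mono U s u v : cont_section le U s -> prod_open le U -> U u ->
  le (fst v) (fst u) -> le (snd v) (snd u) -> forall t, unit_I t -> le (s v t) (s u t).
Proof.
  intros [_ Hc] HU Hu H1 H2 t Ht.
  assert (HG : co_open le (fun g => forall c, t <= c <= t -> le (g c) (s u t))).
  { apply (co_sub le (fun c => t <= c <= t) (fun z => le z (s u t))).
    - apply compact_P3.
    - intros c Hc'. replace c with t by lra. exact Ht.
    - apply down_open. }
  destruct (Hc _ HG) as [V [HV HGV]].
  assert (Vu : V u).
  { apply HGV; auto. intros c Hc'. replace c with t by lra. apply le_refl. }
  assert (Vv : V v) by exact (prod_open_down V u v HV Vu H1 H2).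
  assert (Uv : U v) by exact (prod_open_down U u v HU Hu H1 H2).
  apply (proj2 (HGV v Uv) Vv). lra.
Qed.

Lemma key (ga de e1 e2 : R -> T) ya yc x1 x2 :
  is_path le ga -> is_path le de -> is_path le e1 -> is_path le e2 ->
  bot ya = false -> bot yc = false -> ya <> yc ->
  bot x1 = true -> bot x2 = true -> x1 <> x2 ->
  (forall t, unit_I t -> le (e1 t) (ga t) /\ le (e1 t) (de t) /\
                         le (e2 t) (ga t) /\ le (e2 t) (de t)) ->
  let Q := fun t => ga t = ya /\ de t = yc /\ e1 t = x1 /\ e2 t = x2 in
  (Q 0 <-> Q 1).
Proof.
  intros Pg Pd P1 P2 Hya Hyc Hne Hx1 Hx2 Hx Hord Q.
  assert (Fy : forall (g : R -> T) y, is_path le g -> bot y = false ->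
     loc_open (fun t => g t <> y)).
  { intros g y Pg' Hy t Ht Hgt. destruct (path_local g t Pg' Ht) as [d [Hd Hd']].
    exists d; split; auto. intros s Hs Hst Heq.
    apply Hgt. symmetry. apply le_maxl; auto. rewrite <- Heq. auto. }
  apply I_conn.
  - intros t Ht [Q1 [Q2 [Q3 Q4]]].
    destruct (path_local _ t Pg Ht) as [d1 [Hd1 H1]].
    destruct (path_local _ t Pd Ht) as [d2 [Hd2 H2]].
    destruct (path_local _ t P1 Ht) as [d3 [Hd3 H3]].
    destruct (path_local _ t P2 Ht) as [d4 [Hd4 H4]].
    exists (Rmin (Rmin d1 d2) (Rmin d3 d4)). split.
    { repeat apply Rmin_glb_lt; auto. }
    intros s Hs Hst.
    assert (Hm1 := Rmin_l (Rmin d1 d2) (Rmin d3 d4)).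
    assert (Hm2 := Rmin_r (Rmin d1 d2) (Rmin d3 d4)).
    assert (Hm3 := Rmin_l d1 d2). assert (Hm4 := Rmin_r d1 d2).
    assert (Hm5 := Rmin_l d3 d4). assert (Hm6 := Rmin_r d3 d4).
    assert (E1 : e1 s = x1).
    { apply le_top_eq; auto. rewrite <- Q3. apply H3; auto; lra. }
    assert (E2 : e2 s = x2).
    { apply le_top_eq; auto. rewrite <- Q4. apply H4; auto; lra. }
    destruct (Hord s Hs) as [O1 [O2 [O3 O4]]].
    rewrite E1 in O1, O2. rewrite E2 in O3, O4.
    assert (Tg : bot (ga s) = false).
    { destruct (bot (ga s)) eqn:E; auto. exfalso. apply Hx.
      rewrite (le_top_eq _ _ E O1). rewrite (le_top_eq _ _ E O3). reflexivity. }
    assert (Td : bot (de s) = false).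
    { destruct (bot (de s)) eqn:E; auto. exfalso. apply Hx.
      rewrite (le_top_eq _ _ E O2). rewrite (le_top_eq _ _ E O4). reflexivity. }
    split; [|split; [|split]]; auto.
    + rewrite <- Q1. apply le_maxl; auto. apply H1; auto; lra.
    + rewrite <- Q2. apply le_maxl; auto. apply H2; auto; lra.
  - intros t Ht HnQ.
    assert (Fx : forall (e : R -> T) x, is_path le e -> bot (e t) = true -> e t <> x ->
       exists d, d > 0 /\ forall s, unit_I s -> Rabs (s - t) < d -> e s <> x).
    { intros e x Pe B Hn. destruct (path_local e t Pe Ht) as [d [Hd Hd']].
      exists d; split; auto. intros s Hs Hst Heq. apply Hn.
      rewrite <- Heq. symmetry. apply le_top_eq; auto. }
    destruct (classic (ga t = ya)) as [Ea|Ea].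
    2:{ destruct (Fy ga ya Pg Hya t Ht Ea) as [d [Hd Hd']]. exists d; split; auto.
        intros s Hs Hst [Q1 _]. exact (Hd' s Hs Hst Q1). }
    destruct (classic (de t = yc)) as [Ec|Ec].
    2:{ destruct (Fy de yc Pd Hyc t Ht Ec) as [d [Hd Hd']]. exists d; split; auto.
        intros s Hs Hst [_ [Q2 _]]. exact (Hd' s Hs Hst Q2). }
    destruct (Hord t Ht) as [O1 [O2 [O3 O4]]].
    destruct (classic (e1 t = x1)) as [E1|E1].
    + destruct (classic (e2 t = x2)) as [E2|E2].
      { exfalso. apply HnQ. unfold Q. auto. }
      destruct (bot (e2 t)) eqn:B.
      * destruct (Fx e2 x2 P2 B E2) as [d [Hd Hd']]. exists d; split; auto.
        intros s Hs Hst [_ [_ [_ Q4]]]. exact (Hd' s Hs Hst Q4).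
      * exfalso. apply Hne. rewrite <- Ea, <- Ec.
        rewrite <- (le_maxl _ _ B O3). exact (le_maxl _ _ B O4).
    + destruct (bot (e1 t)) eqn:B.
      * destruct (Fx e1 x1 P1 B E1) as [d [Hd Hd']]. exists d; split; auto.
        intros s Hs Hst [_ [_ [Q3 _]]]. exact (Hd' s Hs Hst Q3).
      * exfalso. apply Hne. rewrite <- Ea, <- Ec.
        rewrite <- (le_maxl _ _ B O1). exact (le_maxl _ _ B O2).
Qed.

Variable n : nat.
Variable y : nat -> T.
Hypothesis Hy1 : forall i, (i < n)%nat -> bot (y i) = false.
Hypothesis Hy2 : forall i j, (i < n)%nat -> (j < n)%nat -> y i = y j -> i = j.
Hypothesis Hy3 : forall z, bot z = false -> exists i, (i < n)%nat /\ z = y i.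
Variables x1 x2 : T.
Hypothesis Hx1 : bot x1 = true.
Hypothesis Hx2 : bot x2 = true.
Hypothesis Hx12 : x1 <> x2.

Lemma divmod_bounds a : (a < n * n)%nat -> (a / n < n)%nat /\ (a mod n < n)%nat.
Proof.
  intro Ha. assert (n <> 0%nat) by (intro; subst; simpl in Ha; lia).
  split; [apply Nat.Div0.div_lt_upper_bound; lia | apply Nat.mod_upper_bound; auto].
Qed.

Lemma lower k : tc_cover le k -> (n * n <= k)%nat.
Proof.
  intros [U [HU [Hcov Hsec]]].
  apply (pigeon _ _ (fun a b => (b < k)%nat /\ U b (y (a / n), y (a mod n)))).
  - intros a Ha. destruct (Hcov (y (a / n), y (a mod n))) as [b [Hb Hb']].
    exists b. auto.
  - intros a a' b Ha Ha' [Hb Ub] [_ Ub'].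
    destruct (divmod_bounds a Ha) as [Ha1 Ha2].
    destruct (divmod_bounds a' Ha') as [Ha1' Ha2'].
    assert (Hn0 : n <> 0%nat) by lia.
    destruct (Nat.eq_dec (a / n) (a' / n)) as [E1|E1];
    [destruct (Nat.eq_dec (a mod n) (a' mod n)) as [E2|E2]|].
    + rewrite (Nat.div_mod a n Hn0), (Nat.div_mod a' n Hn0), E1, E2. reflexivity.
    + exfalso. destruct (Hsec b Hb) as [s Hs].
      set (u := (y (a / n), y (a mod n))). set (u' := (y (a' / n), y (a' mod n))).
      assert (Hle1 : forall xa xb, bot xa = true -> bot xb = true -> U b (xa, xb)).
      { intros xa xb Ha0 Hb0. apply (prod_open_down _ u); auto; simpl; apply le_bot_top; auto. }
      assert (Hmon : forall xa xb, bot xa = true -> bot xb = true -> forall t, unit_I t ->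
                le (s (xa, xb) t) (s u t) /\ le (s (xa, xb) t) (s u' t)).
      { intros xa xb Ha0 Hb0 t Ht. split;
        [apply (section_mono (U b) s u); auto | apply (section_mono (U b) s u'); auto];
        simpl; apply le_bot_top; auto. }
      destruct Hs as [Hs1 Hs2].
      destruct (Hs1 u Ub) as [Pu [_ Eu]]. destruct (Hs1 u' Ub') as [Pu' [_ Eu']].
      destruct (Hs1 _ (Hle1 x2 x1 Hx2 Hx1)) as [P1 [E10 E11]].
      destruct (Hs1 _ (Hle1 x1 x2 Hx1 Hx2)) as [P2 [E20 E21]].
      simpl in *.
      assert (HK := key (s u) (s u') (s (x2, x1)) (s (x1, x2)) (y (a mod n)) (y (a' mod n)) x1 x2
        Pu Pu' P1 P2 (Hy1 _ Ha2) (Hy1 _ Ha2') (fun H => E2 (Hy2 _ _ Ha2 Ha2' H)) Hx1 Hx2 Hx12).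
      simpl in HK.
      assert (Q1 : s u 1 = y (a mod n) /\ s u' 1 = y (a' mod n) /\ s (x2, x1) 1 = x1 /\ s (x1, x2) 1 = x2) by auto.
      apply HK in Q1.
      * destruct Q1 as [_ [_ [Q _]]]. apply Hx12. congruence.
      * intros t Ht. destruct (Hmon x2 x1 Hx2 Hx1 t Ht); destruct (Hmon x1 x2 Hx1 Hx2 t Ht); auto.
    + exfalso. destruct (Hsec b Hb) as [s Hs].
      set (u := (y (a / n), y (a mod n))). set (u' := (y (a' / n), y (a' mod n))).
      assert (Hle1 : forall xa xb, bot xa = true -> bot xb = true -> U b (xa, xb)).
      { intros xa xb Ha0 Hb0. apply (prod_open_down _ u); auto; simpl; apply le_bot_top; auto. }
      assert (Hmon : forall xa xb, bot xa = true -> bot xb = true -> forall t, unit_I t ->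
                le (s (xa, xb) t) (s u t) /\ le (s (xa, xb) t) (s u' t)).
      { intros xa xb Ha0 Hb0 t Ht. split;
        [apply (section_mono (U b) s u); auto | apply (section_mono (U b) s u'); auto];
        simpl; apply le_bot_top; auto. }
      destruct Hs as [Hs1 Hs2].
      destruct (Hs1 u Ub) as [Pu [Eu _]]. destruct (Hs1 u' Ub') as [Pu' [Eu' _]].
      destruct (Hs1 _ (Hle1 x1 x2 Hx1 Hx2)) as [P1 [E10 E11]].
      destruct (Hs1 _ (Hle1 x2 x1 Hx2 Hx1)) as [P2 [E20 E21]].
      simpl in *.
      assert (HK := key (s u) (s u') (s (x1, x2)) (s (x2, x1)) (y (a / n)) (y (a' / n)) x1 x2
        Pu Pu' P1 P2 (Hy1 _ Ha1) (Hy1 _ Ha1') (fun H => E1 (Hy2 _ _ Ha1 Ha1' H)) Hx1 Hx2 Hx12).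
      simpl in HK.
      assert (Q0 : s u 0 = y (a / n) /\ s u' 0 = y (a' / n) /\ s (x1, x2) 0 = x1 /\ s (x2, x1) 0 = x2) by auto.
      apply HK in Q0.
      * destruct Q0 as [_ [_ [Q _]]]. apply Hx12. congruence.
      * intros t Ht. destruct (Hmon x2 x1 Hx2 Hx1 t Ht); destruct (Hmon x1 x2 Hx1 Hx2 t Ht); auto.
Qed.

Definition sec (yi yj : T) (p : T * T) (t : R) : T :=
  if Rlt_le_dec t (1/3) then fst p
  else if Rlt_le_dec (1/3) t then
    (if Rlt_le_dec t (2/3) then x1
     else if Rlt_le_dec (2/3) t then snd p else yj)
  else yi.

Lemma sec_mono yi yj p q : le (fst q) (fst p) -> le (snd q) (snd p) ->
  forall t, le (sec yi yj q t) (sec yi yj p t).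
Proof.
  intros H1 H2 t. unfold sec.
  destruct (Rlt_le_dec t (1/3)); auto.
  destruct (Rlt_le_dec (1/3) t); [|apply le_refl].
  destruct (Rlt_le_dec t (2/3)); [apply le_refl|].
  destruct (Rlt_le_dec (2/3) t); auto; apply le_refl.
Qed.

Lemma sec_0 yi yj p : sec yi yj p 0 = fst p.
Proof. unfold sec. destruct (Rlt_le_dec 0 (1/3)); auto. lra. Qed.

Lemma sec_1 yi yj p : sec yi yj p 1 = snd p.
Proof.
  unfold sec. destruct (Rlt_le_dec 1 (1/3)); [lra|].
  destruct (Rlt_le_dec (1/3) 1); [|lra].
  destruct (Rlt_le_dec 1 (2/3)); [lra|].
  destruct (Rlt_le_dec (2/3) 1); [auto|lra].
Qed.

Lemma sec_path yi yj p : bot yi = false -> bot yj = false ->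
  le (fst p) yi -> le (snd p) yj -> is_path le (sec yi yj p).
Proof.
  intros Hi Hj Hp1 Hp2 t Ht O HO HOt.
  assert (Hx1i : le x1 yi) by (apply le_bot_top; auto).
  assert (Hx1j : le x1 yj) by (apply le_bot_top; auto).
  assert (L : exists d, d > 0 /\ forall s, unit_I s -> Rabs (s - t) < d ->
             le (sec yi yj p s) (sec yi yj p t)).
  { destruct (Rlt_le_dec t (1/3)) as [T1|T1].
    - exists (1/3 - t). split; [lra|]. intros s Hs Hst. apply Rabs_def2 in Hst.
      unfold sec. destruct (Rlt_le_dec s (1/3)); [|lra].
      destruct (Rlt_le_dec t (1/3)); [apply le_refl|lra].
    - destruct (Rlt_le_dec (1/3) t) as [T2|T2].
      + destruct (Rlt_le_dec t (2/3)) as [T3|T3].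
        * exists (Rmin (t - 1/3) (2/3 - t)). split; [apply Rmin_glb_lt; lra|].
          intros s Hs Hst. apply Rabs_def2 in Hst.
          assert (M1 := Rmin_l (t - 1/3) (2/3 - t)). assert (M2 := Rmin_r (t - 1/3) (2/3 - t)).
          unfold sec.
          destruct (Rlt_le_dec s (1/3)); [lra|]. destruct (Rlt_le_dec (1/3) s); [|lra].
          destruct (Rlt_le_dec s (2/3)); [|lra].
          destruct (Rlt_le_dec t (1/3)); [lra|]. destruct (Rlt_le_dec (1/3) t); [|lra].
          destruct (Rlt_le_dec t (2/3)); [apply le_refl|lra].
        * destruct (Rlt_le_dec (2/3) t) as [T4|T4].
          -- exists (t - 2/3). split; [lra|]. intros s Hs Hst. apply Rabs_def2 in Hst.
             unfold sec.
             destruct (Rlt_le_dec s (1/3)); [lra|]. destruct (Rlt_le_dec (1/3) s); [|lra].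
             destruct (Rlt_le_dec s (2/3)); [lra|]. destruct (Rlt_le_dec (2/3) s); [|lra].
             destruct (Rlt_le_dec t (1/3)); [lra|]. destruct (Rlt_le_dec (1/3) t); [|lra].
             destruct (Rlt_le_dec t (2/3)); [lra|]. destruct (Rlt_le_dec (2/3) t); [apply le_refl|lra].
          -- exists (1/3). split; [lra|]. intros s Hs Hst. apply Rabs_def2 in Hst.
             assert (Et : sec yi yj p t = yj).
             { unfold sec.
               destruct (Rlt_le_dec t (1/3)); [lra|]. destruct (Rlt_le_dec (1/3) t); [|lra].
               destruct (Rlt_le_dec t (2/3)); [lra|]. destruct (Rlt_le_dec (2/3) t); [lra|auto]. }
             rewrite Et. unfold sec.
             destruct (Rlt_le_dec s (1/3)); [lra|]. destruct (Rlt_le_dec (1/3) s); [|lra].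
             destruct (Rlt_le_dec s (2/3)); auto.
             destruct (Rlt_le_dec (2/3) s); auto. apply le_refl.
      + exists (1/3). split; [lra|]. intros s Hs Hst. apply Rabs_def2 in Hst.
        assert (Et : sec yi yj p t = yi).
        { unfold sec.
          destruct (Rlt_le_dec t (1/3)); [lra|]. destruct (Rlt_le_dec (1/3) t); [lra|auto]. }
        rewrite Et. unfold sec.
        destruct (Rlt_le_dec s (1/3)); auto. destruct (Rlt_le_dec (1/3) s); [|apply le_refl].
        destruct (Rlt_le_dec s (2/3)); auto. lra. }
  destruct L as [d [Hd Hd']]. exists d. split; auto.
  intros s Hs Hst. exact (HO _ _ (Hd' s Hs Hst) HOt).
Qed.

Lemma upper : (0 < n)%nat -> tc_cover le (n * n).
Proof.
  intros Hn.
  set (U := fun a (p : T * T) => le (fst p) (y (a / n)) /\ le (snd p) (y (a mod n))).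
  exists U. split; [|split].
  - intros a Ha p [Hp1 Hp2]. exists (fun z => le z (y (a / n))), (fun z => le z (y (a mod n))).
    repeat split; auto using down_open.
  - intros [p1 p2].
    assert (Hc : forall z, exists i, (i < n)%nat /\ le z (y i)).
    { intro z. destruct (bot z) eqn:B.
      - exists 0%nat. split; auto. apply le_bot_top; auto.
      - destruct (Hy3 z B) as [i [Hi ->]]. exists i. split; auto. apply le_refl. }
    destruct (Hc p1) as [i [Hi Hi']]. destruct (Hc p2) as [j [Hj Hj']].
    exists (i * n + j)%nat. split; [nia|].
    assert (Hn0 : n <> 0%nat) by lia.
    assert (D : ((i * n + j) / n = i)%nat).
    { rewrite Nat.div_add_l by auto. rewrite Nat.div_small by auto. lia. }
    assert (M : ((i * n + j) mod n = j)%nat).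
    { rewrite Nat.add_comm, Nat.Div0.mod_add. apply Nat.mod_small; auto. }
    unfold U; simpl. rewrite D, M. auto.
  - intros a Ha. destruct (divmod_bounds a Ha) as [Ha1 Ha2].
    exists (sec (y (a / n)) (y (a mod n))). split.
    + intros u [Hu1 Hu2]. split; [apply sec_path; auto|]. split; [apply sec_0|apply sec_1].
    + intros G HG. exists (fun u => U a u /\ G (sec (y (a / n)) (y (a mod n)) u)). split.
      * intros p [Up Gp]. exists (fun z => le z (fst p)), (fun z => le z (snd p)).
        repeat split; auto using down_open, le_refl.
        -- apply le_trans with (fst p); auto. apply Up.
        -- apply le_trans with (snd p); auto. apply Up.
        -- apply (co_open_down G HG _ _ Gp). apply sec_mono; auto.
      * intros u Hu. tauto.
Qed.

Lemma TC_abs : (0 < n)%nat -> TC_eq le (n * n).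
Proof. intros Hn. split; [apply upper; auto|]. intros j Hj. apply lower; auto. Qed.

End Abs.
Close Scope R_scope.

Definition mkf (n : nat) (H : n <> 0%nat) (i : nat) : fin n :=
  exist _ (i mod n) (Nat.mod_upper_bound i n H).

Lemma fin_eq n (a b : fin n) : proj1_sig a = proj1_sig b -> a = b.
Proof. destruct a as [a Ha], b as [b Hb]; simpl; intros ->. f_equal. apply Peano_dec.le_unique. Qed.

Definition isl {A B : Type} (z : A + B) : bool := match z with inl _ => true | inr _ => false end.

Lemma join_TC (m n : nat) : (1 < m)%nat -> (1 < n)%nat ->
  TC_eq (join_le (@discrete_le (fin m)) (@discrete_le (fin n))) (n * n)%nat.
Proof.
  intros Hm Hn.
  assert (Hm0 : m <> 0%nat) by lia. assert (Hn0 : n <> 0%nat) by lia.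
  eapply (TC_abs _ _ isl) with (y := fun i => inr (mkf n Hn0 i))
     (x1 := inl (mkf m Hm0 0)) (x2 := inl (mkf m Hm0 1)); auto; try lia.
  - intros [a|b] [a'|b']; simpl; unfold discrete_le; split; intro H;
      try (destruct H as [H|[H1 H2]]); try congruence; auto.
    all: try contradiction; try (subst; left; reflexivity).
  - intros i j Hi Hj H. injection H as H. simpl in H.
    rewrite !Nat.mod_small in H; auto.
  - intros [a|b] Hz; simpl in Hz; [discriminate|].
    exists (proj1_sig b). split; [apply proj2_sig|]. f_equal. apply fin_eq. simpl.
    symmetry. apply Nat.mod_small. apply proj2_sig.
  - intro H. injection H as H. simpl in H. rewrite (Nat.mod_small 0), (Nat.mod_small 1) in H; lia.
Qed.

Lemma op_TC (m n : nat) : (1 < m)%nat -> (1 < n)%nat ->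
  TC_eq (op_le (join_le (@discrete_le (fin m)) (@discrete_le (fin n)))) (m * m)%nat.
Proof.
  intros Hm Hn.
  assert (Hm0 : m <> 0%nat) by lia. assert (Hn0 : n <> 0%nat) by lia.
  eapply (TC_abs _ _ (fun z => negb (isl z))) with (y := fun i => inl (mkf m Hm0 i))
     (x1 := inr (mkf n Hn0 0)) (x2 := inr (mkf n Hn0 1)); auto; try lia.
  - intros [a|b] [a'|b']; unfold op_le; simpl; unfold discrete_le; split; intro H;
      try (destruct H as [H|[H1 H2]]); try congruence; auto.
    all: try contradiction; try (subst; left; reflexivity).
  - intros i j Hi Hj H. injection H as H. simpl in H.
    rewrite !Nat.mod_small in H; auto.
  - intros [a|b] Hz; simpl in Hz; [|discriminate].
    exists (proj1_sig a). split; [apply proj2_sig|]. f_equal. apply fin_eq. simpl.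
    symmetry. apply Nat.mod_small. apply proj2_sig.
  - intro H. injection H as H. simpl in H. rewrite (Nat.mod_small 0), (Nat.mod_small 1) in H; lia.
Qed.

Theorem theorem3 (m n : nat) (hm : (1 < m)%nat) (hn : (1 < n)%nat) :
  TC_eq (join_le (@discrete_le (fin m)) (@discrete_le (fin n))) (n * n)%nat /\
  TC_eq (op_le (join_le (@discrete_le (fin m)) (@discrete_le (fin n)))) (m * m)%nat /\
  TC_eq (join_le (@discrete_le (fin n)) (@discrete_le (fin m))) (m * m)%nat.
Proof.
  split; [apply join_TC; auto|]. split; [apply op_TC; auto|apply join_TC; auto].
Qed.
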